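(* In the setting below, assume $c^2=\gamma p/\rho>0$ and $0<|H|^2\ne\rho c^2$, and restrict to points with $\xi\cdot H\ne0$ and $\xi\times H\ne0$. Let $\Gamma_1,\Gamma_2,\Gamma_3$ be pairwise disjoint conic neighborhoods of $\{q_1=0\},\{q_2=0\},\{q_3=0\}$, and set $q=q_j$ in $\Gamma_j$. Then $P$ is of real principal type with respect to the Hamilton field $H_q$ of $\operatorname{Char}P=\{q=0\}$; that is, at every point of $\operatorname{Char}P$ there is a $3\times 3$ symbol $\tilde p_2$ with $\tilde p_2p_2=q\operatorname{Id}_3$ nearby, with $q$ a scalar symbol of real principal type.
   Context: $\rho,p:\mathbb R^3\to\mathbb R$, $H:\mathbb R^3\to\mathbb R^3$ smooth, $\rho>0$, $\gamma$ constant; $P$ is the $3\times3$ operator on $\mathbb R_t\times\mathbb R^3_x$: $P\beta=-\rho\partial_t^2\beta+\gamma\nabla(p\operatorname{div}\beta)+\nabla(\beta\cdot\nabla p)+(\nabla\times(\nabla\times(\beta\times H)))\times H+(\nabla\times H)\times(\nabla\times(\beta\times H))$, with principal symbol $p_2=(\rho\tau^2-(H\cdot\xi)^2)\operatorname{Id}_3-(\gamma p+|H|^2)\xi\otimes\xi+(H\cdot\xi)(\xi\otimes H+H\otimes\xi)$. $q_1=\rho\tau^2-(H\cdot\xi)^2$, $q_2=\rho(\tau^2-c_s^2(x,\xi))$, $q_3=\rho(\tau^2-c_f^2(x,\xi))$, where $c^2=\gamma p/\rho$, $h^2=|H|^2/\rho$, $b^2=|\xi\times H|^2/\rho$, $c_{f,s}^2(x,\xi)=\tfrac12\big((c^2+h^2)|\xi|^2\pm\sqrt{(c^2-h^2)^2|\xi|^4+4b^2c^2|\xi|^2}\big)$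 ($+$ for $f$, $-$ for $s$). A scalar symbol $q$ is of real principal type if it is real and its Hamilton field $H_q=\sum\partial_{\xi_j}q\,\partial_{x_j}-\partial_{x_j}q\,\partial_{\xi_j}$ is non-vanishing and not in the radial direction where $q=0$. *)

(* Defs.v *)
From HB Require Import structures.
From mathcomp Require Import all_boot all_order all_algebra.
From mathcomp Require Import all_classical all_reals all_analysis.
Set Implicit Arguments. Unset Strict Implicit. Unset Printing Implicit Defensive.
Import Order.TTheory GRing.Theory Num.Theory.
Import numFieldNormedType.Exports.
Local Open Scope classical_set_scope.
Local Open Scope ring_scope.

Fixpoint Ck (R : realType) (V : normedModType R) (U : set V) (k : nat) (f : V -> R) : Prop :=
  match k with
  | 0 => forall x, U x -> {for x, continuous f}
  | k'.+1 => (forall x, U x -> differentiable f x) /\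
             (forall v : V, Ck U k' (fun x => derive f x v))
  end.

Definition smooth_on (R : realType) (V : normedModType R) (U : set V) (f : V -> R) :=
  forall k, Ck U k f.

Definition dot3 (R : realType) (u v : 'rV[R]_3) : R := \sum_(i < 3) u ord0 i * v ord0 i.
Definition sqn3 (R : realType) (u : 'rV[R]_3) : R := dot3 u u.
Definition cross3 (R : realType) (u v : 'rV[R]_3) : 'rV[R]_3 :=
  \row_(i < 3) (u ord0 (inord ((i + 1) %% 3)) * v ord0 (inord ((i + 2) %% 3))
              - u ord0 (inord ((i + 2) %% 3)) * v ord0 (inord ((i + 1) %% 3))).

(* ---------- phase space T^*(R_t x R^3_x) = R^8 ----------
   coordinates z = (t, x1, x2, x3, tau, xi1, xi2, xi3) *)
Definition tco (R : realType) (z : 'rV[R]_8) : R := z ord0 (inord 0).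
Definition xco (R : realType) (z : 'rV[R]_8) : 'rV[R]_3 := \row_(i < 3) z ord0 (inord i.+1).
Definition tauco (R : realType) (z : 'rV[R]_8) : R := z ord0 (inord 4).
Definition xico (R : realType) (z : 'rV[R]_8) : 'rV[R]_3 := \row_(i < 3) z ord0 (inord (i + 5)).

Definition pd (R : realType) (a : 'rV[R]_8 -> R) (z : 'rV[R]_8) (k : nat) : R :=
  derive a z (delta_mx ord0 (inord k)).

(* Hamilton field H_a = sum d_eta a d_y - d_y a d_eta, with y = (t,x), eta = (tau,xi) *)
Definition hamilton (R : realType) (a : 'rV[R]_8 -> R) (z : 'rV[R]_8) : 'rV[R]_8 :=
  \row_(i < 8) (if (i < 4)%N then pd a z (i + 4) else - pd a z (i - 4)).

Definition radial (R : realType) (z : 'rV[R]_8) : 'rV[R]_8 :=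
  \row_(i < 8) (if (i < 4)%N then 0 else z ord0 i).

Definition dil (R : realType) (l : R) (z : 'rV[R]_8) : 'rV[R]_8 :=
  \row_(i < 8) (if (i < 4)%N then z ord0 i else l * z ord0 i).

Definition conic (R : realType) (G : set 'rV[R]_8) : Prop :=
  forall z l, G z -> 0 < l -> G (dil l z).

Definition real_principal_type_at (R : realType) (a : 'rV[R]_8 -> R) (z : 'rV[R]_8) : Prop :=
  differentiable a z /\ hamilton a z != 0 /\ ~ (exists c : R, hamilton a z = c *: radial z).

Section MHD.
Variables (R : realType) (rho pr : 'rV[R]_3 -> R) (H : 'rV[R]_3 -> 'rV[R]_3) (gamma : R).

Definition csq (x : 'rV[R]_3) : R := gamma * pr x / rho x.
Definition hsq (x : 'rV[R]_3) : R := sqn3 (H x) / rho x.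
Definition bsq (x xi : 'rV[R]_3) : R := sqn3 (cross3 xi (H x)) / rho x.

Definition cfsq (x xi : 'rV[R]_3) : R :=
  ((csq x + hsq x) * sqn3 xi
   + Num.sqrt ((csq x - hsq x) ^+ 2 * sqn3 xi ^+ 2 + 4 * bsq x xi * csq x * sqn3 xi)) / 2.
Definition cssq (x xi : 'rV[R]_3) : R :=
  ((csq x + hsq x) * sqn3 xi
   - Num.sqrt ((csq x - hsq x) ^+ 2 * sqn3 xi ^+ 2 + 4 * bsq x xi * csq x * sqn3 xi)) / 2.

Definition q1 (z : 'rV[R]_8) : R :=
  rho (xco z) * tauco z ^+ 2 - (dot3 (H (xco z)) (xico z)) ^+ 2.
Definition q2 (z : 'rV[R]_8) : R := rho (xco z) * (tauco z ^+ 2 - cssq (xco z) (xico z)).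
Definition q3 (z : 'rV[R]_8) : R := rho (xco z) * (tauco z ^+ 2 - cfsq (xco z) (xico z)).

Definition qj (j : 'I_3) : 'rV[R]_8 -> R :=
  if val j == 0%N then q1 else if val j == 1%N then q2 else q3.

Definition p2 (z : 'rV[R]_8) : 'M[R]_3 :=
  let x := xco z in let xi := xico z in let Hx := H x in
  \matrix_(i < 3, j < 3)
    (q1 z * (i == j)%:R
     - (gamma * pr x + sqn3 Hx) * (xi ord0 i * xi ord0 j)
     + dot3 Hx xi * (xi ord0 i * Hx ord0 j + Hx ord0 i * xi ord0 j)).

Definition Dom (z : 'rV[R]_8) : Prop :=
  dot3 (xico z) (H (xco z)) != 0 /\ cross3 (xico z) (H (xco z)) != 0.

End MHD.

(* Main.v *)
Require Import Defs.
From HB Require Import structures.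
From mathcomp Require Import all_boot all_order all_algebra.
From mathcomp Require Import all_classical all_reals all_analysis.
From mathcomp Require Import ring lra zify.
Import Order.TTheory GRing.Theory Num.Theory.
Import numFieldNormedType.Exports.
Local Open Scope classical_set_scope.
Local Open Scope ring_scope.


Section S.
Context {R : realType} {V W : normedModType R}.

Lemma diff_near (f g : V -> W) x : (\forall y \near x, f y = g y) ->
  differentiable f x -> differentiable g x.
Proof.
move=> fg df; apply/diffP.
pose P := (fun (dg : {linear V -> W}) => continuous dg /\ forall y,
      g y = g (lim (nbhs x)) + dg (y - lim (nbhs x)) +o_(y \near (nbhs x)) (y - lim (nbhs x))).
have : P (get P).
  apply: getPex; exists ('d f x); split; first exact: diff_continuous.
  have fx : f x = g x := nbhs_singleton fg.
  pose F : filter_on V := nbhs x.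
  pose e := (fun y => y - lim (nbhs x)).
  have HF : f = (fun y => f (lim (nbhs x)) + 'd f x (y - lim (nbhs x))) +o_ F e.
    by apply/funext => y; exact: (diffE df y).
  suff H : g = (fun y => g (lim (nbhs x)) + 'd f x (y - lim (nbhs x))) +o_ F e.
    by move=> y; exact: (congr1 (fun h => h y) H).
  apply/eqaddoP => eps eps0.
  move/eqaddoP: HF => /(_ eps eps0).
  apply: filterS2 fg => y fgy /=.
  rewrite !fctE -fgy; suff -> : g (lim (nbhs x)) = f (lim (nbhs x)) by [].
  by rewrite lim_id // fx.
by [].
Qed.

End S.

Section Ck.
Context {R : realType} {V : normedModType R}.
Variable U : set V.
Hypothesis oU : open U.

Lemma nearU x : U x -> \forall y \near x, U y.
Proof. by move=> Ux; apply: open_nbhs_nbhs. Qed.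

Lemma Ck_ext {k} {f g : V -> R} : (forall x, U x -> f x = g x) -> Ck U k f -> Ck U k g.
Proof.
elim: k f g => [|k IH] f g fg /=.
  move=> cf x Ux.
  rewrite /prop_for /continuous_at -(fg x Ux).
  apply: cvg_trans (cf x Ux); apply: near_eq_cvg.
  exact: (filterS (fun y Uy => fg y Uy) (nearU _ Ux)).
case=> dfx dfv; split.
  move=> x Ux; apply: diff_near (dfx x Ux).
  exact: (filterS (fun y Uy => fg y Uy) (nearU _ Ux)).
move=> v; apply: IH (dfv v) => x Ux; apply: near_eq_derive.
exact: (filterS (fun y Uy => fg y Uy) (nearU _ Ux)).
Qed.

Lemma Ck_mono {k} {f : V -> R} : Ck U k.+1 f -> Ck U k f.
Proof.
elim: k f => [|k IH] f /=.
  by case=> d _ x Ux; exact: differentiable_continuous (d x Ux).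
by case=> d dv; split => // v; exact: IH (dv v).
Qed.

Lemma Ck_cst k (c : R) : Ck U k (fun _ => c).
Proof.
elim: k c => [|k IH] c /=.
  by move=> x _; exact: cvg_cst.
split; first by move=> x _; exact: differentiable_cst.
move=> v; have -> : (fun x => derive (fun _ : V => c) x v) = fun _ => 0.
  by apply: funext => x; exact: derive_cst.
exact: IH.
Qed.

Lemma Ck_add {k} {f g : V -> R} : Ck U k f -> Ck U k g -> Ck U k (fun x => f x + g x).
Proof.
elim: k f g => [|k IH] f g /=.
  by move=> cf cg x Ux; apply: cvgD; [exact: cf|exact: cg].
case=> df dfv [dg dgv]; split.
  by move=> x Ux; exact: (differentiableD (df x Ux) (dg x Ux)).
move=> v; apply: Ck_ext (IH _ _ (dfv v) (dgv v)) => x Ux.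
rewrite [RHS]deriveD //; apply: diff_derivable; first [exact: (df x Ux) | exact: (dg x Ux)].
Qed.

Lemma Ck_mul {k} {f g : V -> R} : Ck U k f -> Ck U k g -> Ck U k (fun x => f x * g x).
Proof.
elim: k f g => [|k IH] f g /=.
  by move=> cf cg x Ux; apply: cvgM; [exact: cf|exact: cg].
move=> Hf Hg; have Hf' := Ck_mono Hf; have Hg' := Ck_mono Hg.
case: Hf => df dfv; case: Hg => dg dgv; split.
  by move=> x Ux; exact: (differentiableM (df x Ux) (dg x Ux)).
move=> v; apply: Ck_ext (Ck_add (IH _ _ Hf' (dgv v)) (IH _ _ Hg' (dfv v))) => x Ux.
rewrite [RHS]deriveM //; apply: diff_derivable; first [exact: (df x Ux) | exact: (dg x Ux)].
Qed.

Lemma Ck_opp {k} {f : V -> R} : Ck U k f -> Ck U k (fun x => - f x).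
Proof.
move=> Hf; apply: Ck_ext (Ck_mul (Ck_cst k (-1)) Hf) => x _; by rewrite mulN1r.
Qed.

Lemma Ck_inv {k} {f : V -> R} : Ck U k f -> (forall x, U x -> f x != 0) ->
  Ck U k (fun x => (f x)^-1).
Proof.
elim: k f => [|k IH] f /=.
  by move=> cf f0 x Ux; apply: cvgV; [exact: f0|exact: cf].
move=> Hf f0; have Hf' := Ck_mono Hf.
case: Hf => df dfv; split.
  by move=> x Ux; exact: (differentiableV (df x Ux) (f0 x Ux)).
move=> v; apply: Ck_ext (Ck_mul (Ck_opp (Ck_mul (IH _ Hf' f0) (IH _ Hf' f0))) (dfv v)) => x Ux.
rewrite [RHS]deriveV //; [|exact: f0|apply: diff_derivable; exact: df].
by rewrite -exprVn expr2.
Qed.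


Lemma sqrt_diff {r : R} : 0 < r -> differentiable (@Num.sqrt R) r.
Proof. by move=> r0; apply/derivable1_diffP; exact: (@ex_derive _ _ _ _ _ _ _ (is_derive1_sqrt r0)). Qed.

Lemma sqrt_dE (r t : R) : 0 < r -> 'd (@Num.sqrt R) r t = t * (2 * Num.sqrt r)^-1.
Proof.
move=> r0; rewrite -[t in LHS]mulr1 -[t * 1]/(t *: (1:R)) linearZ /=.
by rewrite -deriveE ?derive_sqrt //; exact: sqrt_diff.
Qed.

Lemma Ck_sqrt {k} {f : V -> R} : Ck U k f -> (forall x, U x -> 0 < f x) ->
  Ck U k (fun x => Num.sqrt (f x)).
Proof.
elim: k f => [|k IH] f /=.
  move=> cf f0 x Ux; exact: (continuous_comp (cf x Ux) (@sqrt_continuous R _)).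
move=> Hf f0; have Hf' := Ck_mono Hf.
case: Hf => df dfv; split.
  move=> x Ux; exact: (differentiable_comp (df x Ux) (sqrt_diff (f0 x Ux))).
move=> v.
have H2 : forall x, U x -> 2 * Num.sqrt (f x) != 0.
  by move=> x Ux; rewrite mulf_neq0 // gt_eqF // sqrtr_gt0 f0.
apply: Ck_ext (Ck_mul (dfv v) (Ck_inv (Ck_mul (Ck_cst k 2) (IH _ Hf' f0)) H2)) => x Ux.
rewrite [RHS](deriveE v (differentiable_comp (df x Ux) (sqrt_diff (f0 x Ux)))).
rewrite (diff_comp (df x Ux) (sqrt_diff (f0 x Ux))) /=.
have E1 := deriveE v (df x Ux). rewrite E1.
exact: (esym (sqrt_dE (f x) ('d f x v) (f0 x Ux))).
Qed.

Lemma Ck_sum {k} (I : Type) (r : seq I) (P : pred I) (F : I -> V -> R) :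
  (forall i, Ck U k (F i)) -> Ck U k (fun x => \sum_(i <- r | P i) F i x).
Proof.
move=> HF; elim: r => [|a r IHr].
  have -> : (fun x => \sum_(i <- [::] | P i) F i x) = fun _ => 0.
    by apply: funext => x; rewrite big_nil.
  exact: Ck_cst.
have -> : (fun x => \sum_(i <- a :: r | P i) F i x) =
  fun x => if P a then F a x + \sum_(i <- r | P i) F i x else \sum_(i <- r | P i) F i x.
  by apply: funext => x; rewrite big_cons.
by case: (P a) => //; exact: Ck_add.
Qed.

Lemma Ck_prod {k} (I : Type) (r : seq I) (P : pred I) (F : I -> V -> R) :
  (forall i, Ck U k (F i)) -> Ck U k (fun x => \prod_(i <- r | P i) F i x).
Proof.
move=> HF; elim: r => [|a r IHr].
  have -> : (fun x => \prod_(i <- [::] | P i) F i x) = fun _ => 1.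
    by apply: funext => x; rewrite big_nil.
  exact: Ck_cst.
have -> : (fun x => \prod_(i <- a :: r | P i) F i x) =
  fun x => if P a then F a x * \prod_(i <- r | P i) F i x else \prod_(i <- r | P i) F i x.
  by apply: funext => x; rewrite big_cons.
by case: (P a) => //; exact: Ck_mul.
Qed.

Lemma Ck_exp {k} {f : V -> R} n : Ck U k f -> Ck U k (fun x => f x ^+ n).
Proof.
move=> Hf; elim: n => [|n IHn].
  have -> : (fun x => f x ^+ 0) = fun _ => 1 by apply: funext => x; rewrite expr0.
  exact: Ck_cst.
have -> : (fun x => f x ^+ n.+1) = fun x => f x * f x ^+ n.
  by apply: funext => x; rewrite exprS.
exact: Ck_mul.
Qed.

Lemma Ck_sub {k} {f : V -> R} (U' : set V) : U' `<=` U -> Ck U k f -> Ck U' k f.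
Proof.
move=> sU; elim: k f => [|k IH] f /=.
  by move=> cf x /sU; exact: cf.
by case=> df dfv; split => [x /sU|v]; [exact: df | exact: IH].
Qed.

End Ck.

Lemma Ck_compL {R : realType} {V W2 : normedModType R} (U : set V)
  (L : V -> W2) (f : W2 -> R) k :
  (forall x, differentiable L x) -> (forall (h : R) v x, L (h *: v + x) = h *: L v + L x) ->
  smooth_on setT f -> Ck U k (fun x => f (L x)).
Proof.
move=> dL linL; elim: k f => [|k IH] f sf /=.
  move=> x _; exact: (continuous_comp (differentiable_continuous (dL x)) (sf 0%N (L x) I)).
split.
  move=> x _; exact: (differentiable_comp (dL x) ((sf 1%N).1 (L x) I)).
move=> v.
have -> : (fun x => derive (fun y => f (L y)) x v) = fun x => derive f (L x) (L v).
  apply: funext => x; rewrite /derive.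
  have -> : (fun h : R => h^-1 *: (((fun y => f (L y)) \o shift x) (h *: v) - f (L x))) =
    (fun h : R => h^-1 *: ((f \o shift (L x)) (h *: L v) - f (L x))).
    by apply: funext => h /=; rewrite linL.
  by [].
apply: (IH (fun y => derive f y (L v))) => n; exact: ((sf n.+1).2 (L v)).
Qed.


Lemma det3 (R : comRingType) (A : 'M[R]_3) :
  let a i j := A (inord i) (inord j) in
  \det A = a 0 0 * (a 1 1 * a 2 2 - a 1 2 * a 2 1)
         - a 0 1 * (a 1 0 * a 2 2 - a 1 2 * a 2 0)
         + a 0 2 * (a 1 0 * a 2 1 - a 1 1 * a 2 0).
Proof.
move=> a.
rewrite (expand_det_row _ ord0) !big_ord_recr big_ord0 /= /cofactor.
rewrite !(expand_det_row _ ord0) !big_ord_recr big_ord0 /= /cofactor.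
rewrite !big_ord0 !det_mx11 !mxE.
have Aget : forall i j : 'I_3, A i j = a i j by move=> i j; rewrite /a !inord_val.
rewrite !Aget /= /bump /=.
rewrite !add0n !expr0 !expr1 !mul1r sqrrN expr1n; ring.
Qed.

Lemma det3E (R : comRingType) (A : 'M[R]_3) :
  \det A = A (inord 0) (inord 0) * (A (inord 1) (inord 1) * A (inord 2) (inord 2) - A (inord 1) (inord 2) * A (inord 2) (inord 1))
         - A (inord 0) (inord 1) * (A (inord 1) (inord 0) * A (inord 2) (inord 2) - A (inord 1) (inord 2) * A (inord 2) (inord 0))
         + A (inord 0) (inord 2) * (A (inord 1) (inord 0) * A (inord 2) (inord 1) - A (inord 1) (inord 1) * A (inord 2) (inord 0)).
Proof. exact: det3. Qed.

Lemma inord_eq3 (i j : nat) : (i < 3)%N -> (j < 3)%N -> ((inord i : 'I_3) == inord j) = (i == j).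
Proof. by move=> hi hj; rewrite -val_eqE /= !inordK. Qed.

Lemma sum3 (R : comRingType) (F : 'I_3 -> R) : \sum_(i < 3) F i = F (inord 0) + F (inord 1) + F (inord 2).
Proof.
rewrite !big_ord_recr big_ord0 /= add0r; congr (_ + _ + _); congr F; apply: val_inj => /=; by rewrite inordK.
Qed.

Section Alg.
Variables (R : realType) (rho pr : 'rV[R]_3 -> R) (H : 'rV[R]_3 -> 'rV[R]_3) (gamma : R).

Lemma det_p2 z : rho (xco z) != 0 ->
  0 <= (csq rho pr gamma (xco z) - hsq rho H (xco z)) ^+ 2 * sqn3 (xico z) ^+ 2
       + 4 * bsq rho H (xco z) (xico z) * csq rho pr gamma (xco z) * sqn3 (xico z) ->
  \det (p2 rho pr H gamma z) = q1 rho H z * q2 rho pr H gamma z * q3 rho pr H gamma z.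
Proof.
move=> r0 hD.
set D := (X in 0 <= X) in hD.
have hs : Num.sqrt D ^+ 2 = D by rewrite sqr_sqrtr.
rewrite -mulrA.
have -> : q2 rho pr H gamma z * q3 rho pr H gamma z =
  rho (xco z) ^+ 2 * ((tauco z ^+ 2 - (csq rho pr gamma (xco z) + hsq rho H (xco z)) * sqn3 (xico z) / 2) ^+ 2 - D / 4).
  rewrite /q2 /q3 /cssq /cfsq -/D. move: (Num.sqrt D) hs => s <-. clearbody D. by field.
rewrite /D (det3E _ (p2 rho pr H gamma z)) /p2 !mxE /= !inord_eq3 //=.
rewrite /q1 /csq /hsq /bsq /sqn3 /dot3 !sum3 /cross3 !mxE !inordK //=.
set xi := xico z. set Hx := H (xco z).
by field.
Qed.
End Alg.


Lemma smooth_id (R : realType) : smooth_on setT (fun t : R => t).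
Proof.
move=> k; elim: k => [|k IH] /=.
  by move=> x _; exact: cvg_id.
split; first by move=> x _; exact: (@ex_diff _ _ _ _ _ _ _ (is_diff_id x)).
move=> v; have -> : (fun x : R => derive (fun t : R => t) x v) = fun _ => v.
  by apply: funext => x; exact: derive_id.
exact: Ck_cst.
Qed.

Section Sm.
Variable R : realType.
Variable U : set 'rV[R]_8.

Lemma Ck_coord k (c : 'I_8) : Ck U k (fun w : 'rV[R]_8 => w ord0 c).
Proof.
apply: (@Ck_compL R _ R U (fun w : 'rV[R]_8 => w ord0 c) (fun t => t)).
- move=> x; exact: differentiable_coord.
- by move=> h v x; rewrite !mxE.
- exact: smooth_id.
Qed.

Lemma xco_diff (x : 'rV[R]_8) : differentiable (@xco R) x.
Proof.
have -> : @xco R = fun z => z ord0 (inord 1) *: (delta_mx ord0 (inord 0) : 'rV[R]_3)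
   + z ord0 (inord 2) *: delta_mx ord0 (inord 1) + z ord0 (inord 3) *: delta_mx ord0 (inord 2).
  apply: funext => z; apply/rowP => i; rewrite !mxE.
  have := ltn_ord i; case: i => [[|[|[|]]]] //= Hi _;
  by rewrite -!val_eqE /= !inordK //= ?mulr1 ?mulr0 ?addr0 ?add0r.
apply: differentiableD; [apply: differentiableD|]; apply: differentiableZl; exact: differentiable_coord.
Qed.

Lemma xco_lin (h : R) (v x : 'rV[R]_8) : xco (h *: v + x) = h *: xco v + xco x.
Proof. by apply/rowP => i; rewrite !mxE. Qed.

Lemma Ck_xco k (f : 'rV[R]_3 -> R) : smooth_on setT f -> Ck U k (fun w => f (xco w)).
Proof. by move=> sf; apply: Ck_compL => //; [exact: xco_diff | exact: xco_lin]. Qed.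

Lemma Ck_xico k (i : 'I_3) : Ck U k (fun w : 'rV[R]_8 => xico w ord0 i).
Proof.
have -> : (fun w : 'rV[R]_8 => xico w ord0 i) = fun w => w ord0 (inord (i + 5)).
  by apply: funext => w; rewrite mxE.
exact: Ck_coord.
Qed.

Lemma Ck_tau k : Ck U k (fun w : 'rV[R]_8 => tauco w).
Proof. exact: Ck_coord. Qed.


End Sm.

Section Sm2.
Variable R : realType.
Variable U : set 'rV[R]_8.
Hypothesis oU : open U.
Variables (rho pr : 'rV[R]_3 -> R) (H : 'rV[R]_3 -> 'rV[R]_3) (gamma : R).
Hypothesis hrho : forall x, 0 < rho x.
Hypothesis srho : smooth_on setT rho.
Hypothesis spr : smooth_on setT pr.
Hypothesis sH : forall i : 'I_3, smooth_on setT (fun x => H x ord0 i).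

Lemma Ck_H k i : Ck U k (fun w => H (xco w) ord0 i).
Proof. exact: (Ck_xco _ U k _ (sH i)). Qed.

Lemma Ck_rho k : Ck U k (fun w => rho (xco w)).
Proof. exact: (Ck_xco _ U k _ srho). Qed.

Lemma Ck_pr k : Ck U k (fun w => pr (xco w)).
Proof. exact: (Ck_xco _ U k _ spr). Qed.

Lemma rho_neq0 : forall w, U w -> rho (xco w) != 0.
Proof. by move=> w _; rewrite gt_eqF. Qed.

Ltac smt0 := repeat first [ apply: Ck_cst | apply: (Ck_add _ oU) | apply: (Ck_mul _ oU) | apply: (Ck_opp _ oU)
   | apply: (Ck_exp _ oU) | apply: (Ck_sum _ oU) | apply: (Ck_prod _ oU) | apply: Ck_tau | apply: Ck_xico
   | apply: Ck_H | apply: Ck_rho | apply: Ck_pr | apply: (Ck_inv _ oU) | apply: rho_neq0 | move=> ? ].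

Lemma Ck_cross k i : Ck U k (fun w => cross3 (xico w) (H (xco w)) ord0 i).
Proof.
have -> : (fun w => cross3 (xico w) (H (xco w)) ord0 i) = fun w =>
  xico w ord0 (inord ((i + 1) %% 3)) * H (xco w) ord0 (inord ((i + 2) %% 3))
  - xico w ord0 (inord ((i + 2) %% 3)) * H (xco w) ord0 (inord ((i + 1) %% 3)).
  by apply: funext => w; rewrite mxE.
smt0.
Qed.

Lemma Ck_q1 k : Ck U k (q1 rho H).
Proof. rewrite /q1 /dot3 /tauco. smt0. Qed.


Ltac smt := repeat first [ apply: Ck_cst | apply: (Ck_add _ oU) | apply: (Ck_mul _ oU) | apply: (Ck_opp _ oU)
   | apply: (Ck_exp _ oU) | apply: (Ck_sum _ oU) | apply: (Ck_prod _ oU) | apply: Ck_tau | apply: Ck_xico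
   | apply: Ck_H | apply: Ck_rho | apply: Ck_pr | apply: (Ck_inv _ oU) | apply: (Ck_sqrt _ oU) | apply: Ck_cross | apply: rho_neq0 | assumption | move=> ? ].


Definition Dz w := (csq rho pr gamma (xco w) - hsq rho H (xco w)) ^+ 2 * sqn3 (xico w) ^+ 2
       + 4 * bsq rho H (xco w) (xico w) * csq rho pr gamma (xco w) * sqn3 (xico w).

Lemma Ck_q2 k : (forall w, U w -> 0 < Dz w) -> Ck U k (q2 rho pr H gamma).
Proof. rewrite /Dz => hD. rewrite /q2 /cssq /csq /hsq /bsq /sqn3 /dot3 /tauco. smt. Qed.

Lemma Ck_q3 k : (forall w, U w -> 0 < Dz w) -> Ck U k (q3 rho pr H gamma).
Proof. rewrite /Dz => hD. rewrite /q3 /cfsq /csq /hsq /bsq /sqn3 /dot3 /tauco. smt. Qed.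

Lemma Ck_p2 k a b : Ck U k (fun w => p2 rho pr H gamma w a b).
Proof.
have -> : (fun w => p2 rho pr H gamma w a b) = fun w =>
    q1 rho H w * (a == b)%:R
     - (gamma * pr (xco w) + sqn3 (H (xco w))) * (xico w ord0 a * xico w ord0 b)
     + dot3 (H (xco w)) (xico w) * (xico w ord0 a * H (xco w) ord0 b + H (xco w) ord0 a * xico w ord0 b).
  by apply: funext => w; rewrite mxE.
apply: (Ck_add _ oU); [apply: (Ck_add _ oU); [apply: (Ck_mul _ oU); [exact: Ck_q1|exact: Ck_cst]|]|].
  rewrite /sqn3 /dot3; smt.
rewrite /sqn3 /dot3; smt.
Qed.

Lemma Ck_cof k a b : Ck U k (fun w => cofactor (p2 rho pr H gamma w) a b).
Proof.
rewrite /cofactor; apply: (Ck_mul _ oU); first exact: Ck_cst.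
apply: (Ck_sum _ oU) => s /=; apply: (Ck_mul _ oU); first exact: Ck_cst.
apply: (Ck_prod _ oU) => i /=.
apply: (Ck_ext _ oU _ (Ck_p2 k _ _)) => w _; rewrite !mxE; reflexivity.
Qed.

Lemma Ck_dotF k : Ck U k (fun w => dot3 (xico w) (H (xco w))).
Proof. rewrite /dot3; smt. Qed.

Lemma Ck_sqcross k : Ck U k (fun w => sqn3 (cross3 (xico w) (H (xco w)))).
Proof. rewrite /sqn3 /dot3; smt. Qed.

End Sm2.


Section N.
Variable R : realType.

Lemma lagrange3 (u v : 'rV[R]_3) : sqn3 (cross3 u v) + dot3 u v ^+ 2 = sqn3 u * sqn3 v.
Proof. rewrite /sqn3 /dot3 !sum3 /cross3 !mxE !inordK //=; ring. Qed.

Lemma dot3C (u v : 'rV[R]_3) : dot3 u v = dot3 v u.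
Proof. by rewrite /dot3; apply: eq_bigr => i _; rewrite mulrC. Qed.

Lemma sqn3_ge0 (u : 'rV[R]_3) : 0 <= sqn3 u.
Proof. rewrite /sqn3 /dot3 sum3; nra. Qed.

Lemma sqn3_eq0 (u : 'rV[R]_3) : sqn3 u = 0 -> u = 0.
Proof.
rewrite /sqn3 /dot3 sum3 => h.
have h0 : u ord0 (inord 0) = 0 by nra.
have h1 : u ord0 (inord 1) = 0 by nra.
have h2 : u ord0 (inord 2) = 0 by nra.
apply/rowP => i; rewrite mxE.
have := ltn_ord i; case: i => [[|[|[|]]]] //= Hi _.
- by rewrite -h0; congr (u ord0 _); apply: val_inj; rewrite /= inordK.
- by rewrite -h1; congr (u ord0 _); apply: val_inj; rewrite /= inordK.
- by rewrite -h2; congr (u ord0 _); apply: val_inj; rewrite /= inordK.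
Qed.

Lemma sqn3_gt0 (u : 'rV[R]_3) : u != 0 -> 0 < sqn3 u.
Proof.
move=> u0; rewrite lt_neqAle sqn3_ge0 andbT eq_sym; apply/eqP => /sqn3_eq0 h.
by rewrite h eqxx in u0.
Qed.

Definition e4 : 'rV[R]_8 := delta_mx ord0 (inord 4).

Lemma shift_e4 (h : R) (z : 'rV[R]_8) :
  xco (h *: e4 + z) = xco z /\ xico (h *: e4 + z) = xico z /\ tauco (h *: e4 + z) = tauco z + h.
Proof.
split; [|split].
- apply/rowP => i; rewrite !mxE.
  have -> : ((inord i.+1 : 'I_8) == inord 4) = false.
have hi := ltn_ord i; rewrite -val_eqE /= !inordK //; try lia; apply/negbTE/eqP; lia.
  by rewrite andbF mulr0 add0r.
- apply/rowP => i; rewrite !mxE.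
  have -> : ((inord (i + 5) : 'I_8) == inord 4) = false.
    have hi := ltn_ord i; rewrite -val_eqE /= !inordK //; try lia; apply/negbTE/eqP; lia.
  by rewrite andbF mulr0 add0r.
- by rewrite /tauco !mxE eqxx /= eqxx mulr1 addrC.
Qed.

Lemma derive_e4 (f : 'rV[R]_8 -> R) z (c d : R) :
  (forall h, f (h *: e4 + z) - f z = h * (c + d * h)) -> derive f z e4 = c.
Proof.
move=> hf; rewrite /derive; apply: cvg_lim => //.
apply: (@cvg_trans _ ((fun h : R => c + d * h) @ 0^')).
  apply: near_eq_cvg; near=> h.
  have h0 : h != 0 by near: h; exact: nbhs_dnbhs_neq.
  rewrite /= hf; rewrite (_ : h^-1 *: (h * (c + d * h)) = h^-1 * (h * (c + d * h))) //.
  by rewrite mulrA mulVf // mul1r.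
suff : (fun h : R => c + d * h) @ 0^' --> c + d * 0 by rewrite mulr0 addr0.
apply: cvg_within_filter.
apply: cvgD; first exact: cvg_cst.
apply: cvgM; [exact: cvg_cst | exact: cvg_id].
Unshelve. all: by end_near.
Qed.

End N.


Lemma open_nz (R : realType) (V : normedModType R) (U : set V) (F : V -> R) :
  open U -> (forall x, U x -> {for x, continuous F}) -> open (U `&` [set x | F x != 0]).
Proof.
move=> oU cF; rewrite openE => x [Ux Fx].
apply: filterI; first exact: open_nbhs_nbhs.
exact: (cvgr_neq0 _ (cF x Ux) Fx).
Qed.

Lemma gen (R : realType) (q Q : 'rV[R]_8 -> R) (P : 'rV[R]_8 -> 'M[R]_3) (G U : set 'rV[R]_8)
  z (rz tz : R) :
  open G -> open U -> G z -> U z -> Q z != 0 ->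
  (forall k, Ck U k q) -> (forall k, Ck U k Q) ->
  (forall a b k, Ck U k (fun w => cofactor (P w) a b)) ->
  (forall w, U w -> \det (P w) = q w * Q w) ->
  (forall h, q (h *: e4 R + z) - q z = h * (2 * rz * tz + rz * h)) -> rz != 0 -> tz != 0 ->
  exists W : set 'rV[R]_8, open W /\ W z /\ W `<=` G /\
         smooth_on W q /\
         (exists pt : 'rV[R]_8 -> 'M[R]_3,
            (forall a b, smooth_on W (fun w => pt w a b)) /\
            (forall w, W w -> pt w *m P w = (q w)%:M)) /\
         real_principal_type_at q z.
Proof.
move=> oG oU Gz Uz Qz sq sQ sC hdet hsh rz0 tz0.
pose W := G `&` (U `&` [set w | Q w != 0]).
have oW : open W by apply: openI => //; apply: open_nz => // x Ux; exact: (sQ 0%N x Ux).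
have sWU : W `<=` U by move=> w [_ []].
exists W; split => //; split; first by split.
split; first by move=> w [].
split; first by move=> k; exact: (Ck_sub _ _ sWU (sq k)).
split.
  exists (fun w => (Q w)^-1 *: \adj (P w)); split.
    move=> a b k.
    have -> : (fun w => ((Q w)^-1 *: \adj (P w)) a b) = fun w => (Q w)^-1 * cofactor (P w) b a.
      by apply: funext => w; rewrite !mxE.
    apply: (Ck_mul _ oW); last exact: (Ck_sub _ _ sWU (sC b a k)).
    apply: (Ck_inv _ oW); first exact: (Ck_sub _ _ sWU (sQ k)).
    by move=> w [_ []].
  move=> w [_ [Uw Qw]].
  by rewrite -scalemxAl mul_adj_mx hdet // scale_scalar_mx mulrC -mulrA mulfV // mulr1.
have hd : derive q z (e4 R) = 2 * rz * tz by exact: (derive_e4 _ _ _ _ _ hsh).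
split; first exact: ((sq 1%N).1 z Uz).
have h0 : (hamilton q z) ord0 ord0 = 2 * rz * tz by rewrite mxE /=; exact: hd.
split.
  apply/eqP => h; move: h0; rewrite h mxE => /esym /eqP.
  by rewrite !mulf_eq0 (negbTE rz0) (negbTE tz0) orbF pnatr_eq0.
case=> c hc; move: h0; rewrite hc !mxE /= mulr0 => /esym /eqP.
by rewrite !mulf_eq0 (negbTE rz0) (negbTE tz0) orbF pnatr_eq0.
Qed.


Theorem proposition5p2 (R : realType) (rho pr : 'rV[R]_3 -> R)
    (H : 'rV[R]_3 -> 'rV[R]_3) (gamma : R) :
  (forall x, 0 < rho x) ->
  smooth_on setT rho -> smooth_on setT pr ->
  (forall i : 'I_3, smooth_on setT (fun x => H x ord0 i)) ->
  (forall x, 0 < csq rho pr gamma x) ->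
  (forall x, 0 < sqn3 (H x)) ->
  (forall x, sqn3 (H x) != rho x * csq rho pr gamma x) ->
  forall Gam : 'I_3 -> set 'rV[R]_8,
  (forall j, open (Gam j)) -> (forall j, conic (Gam j)) ->
  (forall j k, j != k -> Gam j `&` Gam k = set0) ->
  (forall j z, Dom H z -> qj rho pr H gamma j z = 0 -> Gam j z) ->
  (* Char P = {q = 0} on the region considered *)
  (forall z, Dom H z ->
     (\det (p2 rho pr H gamma z) = 0 <->
      exists j, Gam j z /\ qj rho pr H gamma j z = 0)) /\
  (* at every point of Char P: local parametrix-type factorization and real principal type *)
  (forall z, Dom H z -> \det (p2 rho pr H gamma z) = 0 ->
     exists j : 'I_3, Gam j z /\ qj rho pr H gamma j z = 0 /\
       exists W : set 'rV[R]_8, open W /\ W z /\ W `<=` Gam j /\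
         smooth_on W (qj rho pr H gamma j) /\
         (exists pt : 'rV[R]_8 -> 'M[R]_3,
            (forall a b, smooth_on W (fun w => pt w a b)) /\
            (forall w, W w -> pt w *m p2 rho pr H gamma w = (qj rho pr H gamma j w)%:M)) /\
         real_principal_type_at (qj rho pr H gamma j) z).
Proof.
move=> hrho srho spr sH hc hH hne Gam oG cG dG zG.
have r0 : forall z, rho (xco z) != 0 by move=> z; rewrite gt_eqF.
have hDge : forall z, 0 <= Dz _ rho pr H gamma z.
  move=> z; rewrite /Dz; apply: addr_ge0; first by rewrite mulr_ge0 // sqr_ge0.
  apply: mulr_ge0; last exact: sqn3_ge0. apply: mulr_ge0; last exact: ltW (hc _).
  by apply: mulr_ge0 => //; rewrite /bsq divr_ge0 ?sqn3_ge0 // ltW.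

have hdet : forall z, \det (p2 rho pr H gamma z) =
   q1 rho H z * q2 rho pr H gamma z * q3 rho pr H gamma z.
  by move=> z; apply: det_p2 => //; exact: hDge.
have ha : forall z, Dom H z -> 0 < sqn3 (xico z).
  move=> z [d0 c0].
  have L3 := lagrange3 _ (xico z) (H (xco z)).
  have s0 := sqn3_ge0 _ (cross3 (xico z) (H (xco z))).
  have a0 := sqn3_ge0 _ (xico z).
  have hH0 := hH (xco z).
  have d2 : 0 < dot3 (xico z) (H (xco z)) ^+ 2.
    by rewrite lt_neqAle sqr_ge0 andbT eq_sym sqrf_eq0.
  nra.
have hDgt : forall z, Dom H z -> 0 < Dz _ rho pr H gamma z.
  move=> z Dz0; have a0 := ha z Dz0; case: Dz0 => d0 c0.
  have t1 : 0 <= (csq rho pr gamma (xco z) - hsq rho H (xco z)) ^+ 2 * sqn3 (xico z) ^+ 2.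
    by rewrite mulr_ge0 // sqr_ge0.
  have t2 : 0 < 4 * bsq rho H (xco z) (xico z) * csq rho pr gamma (xco z) * sqn3 (xico z).
    apply: mulr_gt0 => //; apply: mulr_gt0 => //; apply: mulr_gt0 => //.
    by rewrite /bsq divr_gt0 //; exact: sqn3_gt0.
  rewrite /Dz; lra.
have oDom : open (Dom H).
  have -> : Dom H = [set w | dot3 (xico w) (H (xco w)) != 0] `&`
                    [set w | sqn3 (cross3 (xico w) (H (xco w))) != 0].
    apply/seteqP; split => w [h1 h2]; split => //.
      by apply: lt0r_neq0; exact: sqn3_gt0.
    apply: contra h2 => /eqP ->; apply/eqP.
    by rewrite /sqn3 /dot3 big1 // => i _; rewrite mxE mul0r.
  apply: openI.
    rewrite -[X in open X]setTI; apply: open_nz => //; first exact: openT.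
    by move=> x _; exact: (Ck_dotF _ _ openT H sH 0%N x I).
  rewrite -[X in open X]setTI; apply: open_nz => //; first exact: openT.
  by move=> x _; exact: (Ck_sqcross _ _ openT H sH 0%N x I).
have part1 : forall z, Dom H z ->
     (\det (p2 rho pr H gamma z) = 0 <->
      exists j, Gam j z /\ qj rho pr H gamma j z = 0).
  move=> z Dz0; rewrite hdet; split.
    move/eqP; rewrite mulf_eq0 => /orP [|/eqP h].
      rewrite mulf_eq0 => /orP [/eqP h|/eqP h].
      - have hq : qj rho pr H gamma (inord 0) z = 0 by rewrite /qj /= inordK.
        by exists (inord 0); split => //; exact: zG.
      - have hq : qj rho pr H gamma (inord 1) z = 0 by rewrite /qj /= inordK.
        by exists (inord 1); split => //; exact: zG.
    - have hq : qj rho pr H gamma (inord 2) z = 0 by rewrite /qj /= inordK.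
      by exists (inord 2); split => //; exact: zG.
  case=> j [_]; rewrite /qj; case: ifP => _; first by move=> ->; rewrite !mul0r.
  by case: ifP => _ ->; rewrite ?mulr0 ?mul0r.
split => //.
move=> z Dz0 hd0.
have [j [Gj qj0]] := (part1 z Dz0).1 hd0.
have key : forall k, k != j -> qj rho pr H gamma k z != 0.
  move=> k kj; apply/eqP => hk; have Gk := zG k z Dz0 hk.
  have E : Gam j `&` Gam k = set0 by apply: dG; rewrite eq_sym.
  have : (Gam j `&` Gam k) z by split.
  by rewrite E.
have hq0 : qj rho pr H gamma (inord 0) = q1 rho H by rewrite /qj /= inordK //=.
have hq1 : qj rho pr H gamma (inord 1) = q2 rho pr H gamma by rewrite /qj /= inordK //=.
have hq2 : qj rho pr H gamma (inord 2) = q3 rho pr H gamma by rewrite /qj /= inordK //=.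
have a0 := ha z Dz0.
have Dgt := hDgt z Dz0.
have sq1 : forall k, Ck (Dom H) k (q1 rho H) by move=> k; apply: Ck_q1.
have sq2 : forall k, Ck (Dom H) k (q2 rho pr H gamma) by move=> k; apply: Ck_q2.
have sq3 : forall k, Ck (Dom H) k (q3 rho pr H gamma) by move=> k; apply: Ck_q3.
have sC : forall a b k, Ck (Dom H) k (fun w => cofactor (p2 rho pr H gamma w) a b).
  by move=> a b k; apply: Ck_cof.
have rz0 := r0 z.
exists j; split => //; split => //.
have cspos : 0 < cssq rho pr H gamma (xco z) (xico z) /\ 0 < cfsq rho pr H gamma (xco z) (xico z).
  have L3 := lagrange3 _ (xico z) (H (xco z)).
  case: (Dz0) => d0 c0.
  rewrite /cssq /cfsq.
  set A := (csq rho pr gamma (xco z) + hsq rho H (xco z)) * sqn3 (xico z).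
  have A0 : 0 < A by rewrite /A mulr_gt0 // addr_gt0 // /hsq divr_gt0.
  have E : A ^+ 2 - Dz _ rho pr H gamma z = 4 * csq rho pr gamma (xco z) * sqn3 (xico z) *
       (dot3 (xico z) (H (xco z)) ^+ 2 / rho (xco z)).
    rewrite /A /Dz /hsq /bsq.
    have -> : sqn3 (cross3 (xico z) (H (xco z))) =
       sqn3 (xico z) * sqn3 (H (xco z)) - dot3 (xico z) (H (xco z)) ^+ 2 by rewrite -L3 addrK.
    by field.
  have P0 : 0 < 4 * csq rho pr gamma (xco z) * sqn3 (xico z) *
       (dot3 (xico z) (H (xco z)) ^+ 2 / rho (xco z)).
    apply: mulr_gt0; first by apply: mulr_gt0 => //; apply: mulr_gt0.
    apply: divr_gt0 => //.
    by rewrite lt_neqAle sqr_ge0 andbT eq_sym sqrf_eq0.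
  have hD : Dz _ rho pr H gamma z < A ^+ 2 by rewrite -subr_gt0 E.
  have hs : Num.sqrt (Dz _ rho pr H gamma z) < A.
    by rewrite -(ger0_norm (ltW A0)) -sqrtr_sqr ltr_sqrt // exprn_gt0.
  have hs0 := sqrtr_ge0 (Dz _ rho pr H gamma z).
  move: hs hs0; rewrite /Dz => hs hs0.
  split; lra.
have := ltn_ord j; case: j Gj qj0 key => [[|[|[|]]] Hj] //= Gj qj0 key _.
- have E : qj rho pr H gamma (Ordinal Hj) = q1 rho H by [].
  rewrite E in qj0 *.
  have k1 : q2 rho pr H gamma z != 0.
    by rewrite -hq1; apply: key; rewrite -val_eqE /= inordK.
  have k2 : q3 rho pr H gamma z != 0.
    by rewrite -hq2; apply: key; rewrite -val_eqE /= inordK.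
  have tz0 : tauco z != 0.
    apply/eqP => t0; case: (Dz0) => d0 _; move: qj0.
    rewrite /q1 t0 expr2 mulr0 mulr0 sub0r => /eqP; rewrite oppr_eq0 sqrf_eq0 dot3C => /eqP h.
    by rewrite h eqxx in d0.
  apply: (gen _ (q1 rho H) (fun w => q2 rho pr H gamma w * q3 rho pr H gamma w)
            (p2 rho pr H gamma) (Gam _) (Dom H) z (rho (xco z)) (tauco z)) => //.
  - by rewrite mulf_neq0.
  - move=> k; exact: (Ck_mul _ oDom (sq2 k) (sq3 k)).
  - by move=> w _; rewrite hdet mulrA.
  - by move=> h; rewrite /q1; have [-> [-> ->]] := shift_e4 _ h z; ring.
- have E : qj rho pr H gamma (Ordinal Hj) = q2 rho pr H gamma by [].
  rewrite E in qj0 *.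
  have k1 : q1 rho H z != 0.
    by rewrite -hq0; apply: key; rewrite -val_eqE /= inordK.
  have k2 : q3 rho pr H gamma z != 0.
    by rewrite -hq2; apply: key; rewrite -val_eqE /= inordK.
  have tz0 : tauco z != 0.
    apply/eqP => t0; move: qj0; rewrite /q2 => /eqP; rewrite mulf_eq0 (negbTE rz0) /= subr_eq0 => /eqP ht.
    by move: ht (proj1 cspos); rewrite t0 expr2 mulr0 => <-; rewrite ltxx.
  apply: (gen _ (q2 rho pr H gamma) (fun w => q1 rho H w * q3 rho pr H gamma w)
            (p2 rho pr H gamma) (Gam _) (Dom H) z (rho (xco z)) (tauco z)) => //.
  - by rewrite mulf_neq0.
  - move=> k; exact: (Ck_mul _ oDom (sq1 k) (sq3 k)).
  - by move=> w _; rewrite hdet; ring.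
  - by move=> h; rewrite /q2; have [-> [-> ->]] := shift_e4 _ h z; ring.
- have E : qj rho pr H gamma (Ordinal Hj) = q3 rho pr H gamma by [].
  rewrite E in qj0 *.
  have k1 : q1 rho H z != 0.
    by rewrite -hq0; apply: key; rewrite -val_eqE /= inordK.
  have k2 : q2 rho pr H gamma z != 0.
    by rewrite -hq1; apply: key; rewrite -val_eqE /= inordK.
  have tz0 : tauco z != 0.
    apply/eqP => t0; move: qj0; rewrite /q3 => /eqP; rewrite mulf_eq0 (negbTE rz0) /= subr_eq0 => /eqP ht.
    by move: ht (proj2 cspos); rewrite t0 expr2 mulr0 => <-; rewrite ltxx.
  apply: (gen _ (q3 rho pr H gamma) (fun w => q1 rho H w * q2 rho pr H gamma w)
            (p2 rho pr H gamma) (Gam _) (Dom H) z (rho (xco z)) (tauco z)) => //.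
  - by rewrite mulf_neq0.
  - move=> k; exact: (Ck_mul _ oDom (sq1 k) (sq2 k)).
  - by move=> w _; rewrite hdet; ring.
  - by move=> h; rewrite /q3; have [-> [-> ->]] := shift_e4 _ h z; ring.
Qed.
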